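(* Let $P$ denote the Petersen graph. For $i=0,\ldots,8$, let $P_i$ be a copy of the graph obtained from $P$ by deleting one edge $[u_i,v_i]$ (so $u_i,v_i$ are the two vertices of degree $2$ in $P_i$), the copies being pairwise vertex-disjoint. Let $G$ be the graph obtained from $P_0\cup\cdots\cup P_8$ by adding the edges $[v_i,u_{i+1}]$ for $i=0,\ldots,8$ (indices modulo $9$). Then $G$ is a bridgeless cubic graph of order $2n=90$ and $\chi'_{[44]}(G)\geq 5$, i.e. the edge set of $G$ cannot be covered by four matchings of size $n-1=44$.
   Context: All graphs are finite and simple. For a positive integer $k$, a $[k]$-matching of $G$ is a matching of $G$ with exactly $k$ edges. The excessive $[k]$-index $\chi'_{[k]}(G)$ is the minimum number of $[k]$-matchings of $G$ whose union is $E(G)$; if some edge of $G$ lies in no $[k]$-matching, one sets $\chi'_{[k]}(G)=\infty$. *)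

(* Defs.v *)
From mathcomp Require Import all_boot.
Set Implicit Arguments. Unset Strict Implicit. Unset Printing Implicit Defensive.

Section Graphs.
Variable V : finType.
Variable adj : rel V.

Definition simple_graph : Prop := irreflexive adj /\ symmetric adj.

Definition edge_set : {set {set V}} :=
  [set e : {set V} | [exists x, exists y, adj x y && (e == [set x; y])]].

Definition is_matching (M : {set {set V}}) : bool :=
  (M \subset edge_set) &&
  [forall e1 in M, forall e2 in M, (e1 != e2) ==> [disjoint e1 & e2]].

Definition is_kmatching (k : nat) (M : {set {set V}}) : bool :=
  is_matching M && (#|M| == k).

Definition coverable_by_kmatchings (k m : nat) : Prop :=
  exists Ms : 'I_m -> {set {set V}},
    (forall i, is_kmatching k (Ms i)) /\ \bigcup_(i < m) Ms i = edge_set.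

(* chi'_[k](G) >= c : every cover of E(G) by [k]-matchings uses >= c of them
   (vacuous when chi'_[k] = infinity) *)
Definition excessive_index_ge (k c : nat) : Prop :=
  forall m, coverable_by_kmatchings k m -> c <= m.

Definition cubic : Prop := forall x : V, #|[set y | adj x y]| = 3.

Definition adj_minus (a b : V) : rel V :=
  fun x y => adj x y && ~~ (((x == a) && (y == b)) || ((x == b) && (y == a))).

Definition bridgeless : Prop :=
  forall x y : V, adj x y -> connect (adj_minus x y) x y.
End Graphs.

(* ---------- The Petersen graph on 'I_10 ----------
   outer 5-cycle 0-1-2-3-4-0, spokes i -- i+5, inner pentagram 5+i -- 5+((i+2) mod 5) *)
Definition petersen_adj_nat (a b : nat) : bool :=
  [|| [&& a < 5, b < 5 & (b == (a + 1) %% 5) || (a == (b + 1) %% 5)],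
      (a < 5) && (b == a + 5),
      (b < 5) && (a == b + 5) |
      [&& 5 <= a, a < 10, 5 <= b, b < 10 &
         (b - 5 == (a - 5 + 2) %% 5) || (a - 5 == (b - 5 + 2) %% 5)]].

Definition petersen_adj : rel 'I_10 := fun a b => petersen_adj_nat a b.

(* P minus the edge [u,v] with u = 0, v = 1 (Petersen is edge-transitive) *)
Definition u0 : 'I_10 := inord 0.
Definition v0 : 'I_10 := inord 1.
Definition petersen_minus_adj : rel 'I_10 := adj_minus petersen_adj u0 v0.

(* ---------- The graph G ----------
   vertex (i, p) = vertex p of copy P_i; u_i = (i,0), v_i = (i,1);
   extra edges [v_i, u_{i+1}], indices mod 9 *)
Definition GV : finType := ('I_9 * 'I_10)%type.

Definition G_adj : rel GV := fun x y =>
  [|| (x.1 == y.1) && petersen_minus_adj x.2 y.2,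
      [&& x.2 == v0, y.2 == u0 & (y.1 : nat) == (x.1 + 1) %% 9] |
      [&& y.2 == v0, x.2 == u0 & (x.1 : nat) == (y.1 + 1) %% 9]].

(* Main.v *)
Require Import Defs.
From mathcomp Require Import all_boot.
Set Implicit Arguments. Unset Strict Implicit. Unset Printing Implicit Defensive.

Notation VV := (prod (ordinal 9) (ordinal 10)).
Definition o10 (k : nat) : 'I_10 := Ordinal (ltn_pmod k (isT : 0 < 10)).
Definition o9 (k : nat) : 'I_9 := Ordinal (ltn_pmod k (isT : 0 < 9)).
Definition pma (a b : nat) : bool :=
  petersen_adj_nat a b && ~~ ((eqn a 0 && eqn b 1) || (eqn a 1 && eqn b 0)).
Definition G_adj' : rel VV := fun (x y : VV) =>
  [|| eqn x.1 y.1 && pma x.2 y.2,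
      [&& eqn x.2 1, eqn y.2 0 & eqn y.1 ((x.1 + 1) %% 9)] |
      [&& eqn y.2 1, eqn x.2 0 & eqn x.1 ((y.1 + 1) %% 9)]].
Definition eqv (x y : VV) := eqn x.1 y.1 && eqn x.2 y.2.
Definition ord9l := map o9 (iota 0 9).
Definition ord10l := map o10 (iota 0 10).
Definition allGV : seq VV := [seq (i,p) | i <- ord9l, p <- ord10l].
Definition adjm (x y : VV) : rel VV := fun a b =>
  G_adj' a b && ~~ ((eqv a x && eqv b y) || (eqv a y && eqv b x)).

Fixpoint dfsp (g : VV -> seq VV) (n : nat) (vis : seq VV) (x y : VV) : option (seq VV) * seq VV :=
  if eqv x y then (Some [::], vis) else
  match n with
  | 0 => (None, vis)
  | n'.+1 =>
    let fix loop (l : seq VV) (vis : seq VV) :=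
      match l with
      | [::] => (None, vis)
      | z :: l' => if has (eqv z) vis then loop l' vis else
          match dfsp g n' (z :: vis) z y with
          | (Some p, v) => (Some (z :: p), v)
          | (None, v) => loop l' v
          end
      end in loop (g x) (x :: vis)
  end.

Definition bridge_ok (x y : VV) : bool :=
  match (dfsp (fun z => filter (adjm x y z) allGV) 90 [::] x y).1 with
  | Some p => path (adjm x y) x p && eqv (last x p) y
  | None => false
  end.

Definition EA := [:: 1;2;3;4;0;1;2;3;4;5;6;7;5;6].
Definition EB := [:: 2;3;4;0;5;6;7;8;9;7;8;9;8;9].
Definition inc (p k : nat) : bool :=
  if k < 14 then (p == nth 0 EA k) || (p == nth 0 EB k)
  else if k == 14 then p == 0 else (k == 15) && (p == 1).
Definition e1 (i : 'I_9) (k : nat) : VV :=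
  if k < 14 then (i, o10 (nth 0 EA k)) else if k == 14 then (i, o10 0) else (i, o10 1).
Definition e2 (i : 'I_9) (k : nat) : VV :=
  if k < 14 then (i, o10 (nth 0 EB k)) else if k == 14 then (o9 (i + 8), o10 1) else (o9 (i + 1), o10 0).

Fixpoint allbl (n : nat) : seq (seq bool) :=
  if n is n'.+1 then [seq b :: s | b <- [:: true; false], s <- allbl n'] else [:: [::]].
Definition locPM (s : seq bool) : bool :=
  all (fun p => count (fun k => nth false s k) (filter (inc p) (iota 0 16)) == 1) (iota 0 10).
Definition mkb (l : seq nat) : seq bool := mkseq (fun k => k \in l) 16.
Definition pmlist : seq (seq bool) := map mkb
  [:: [:: 0;2;4;10;11]; [:: 0;3;7;9;13]; [:: 1;3;5;11;12]; [:: 1;8;9;10;14;15];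
      [:: 2;6;12;13;14;15]; [:: 4;5;6;7;8]].

Lemma c_irr : all (fun x => ~~ G_adj' x x) allGV. Proof. by vm_compute. Qed.
Lemma c_sym : all (fun x => all (fun y => G_adj' x y == G_adj' y x) allGV) allGV.
Proof. by vm_compute. Qed.
Lemma c_cub : all (fun x => count (G_adj' x) allGV == 3) allGV. Proof. by vm_compute. Qed.
Lemma c_uniq : uniq allGV. Proof. by vm_compute. Qed.
Lemma c_bridge : all (fun x => all (fun y => if G_adj' x y then bridge_ok x y else true) allGV) allGV.
Proof. by vm_compute. Qed.
Lemma c_L : all (fun s => if locPM s then s \in pmlist else true) (allbl 16).
Proof. by vm_compute. Qed.
Lemma c_C2 : all (fun msk => if size (mask msk pmlist) <= 4 then has (fun k => all (fun t => ~~ nth false t k) (mask msk pmlist)) (iota 0 16) else true) (allbl 6).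
Proof. by vm_compute. Qed.
Lemma c_pmuniq : uniq pmlist. Proof. by vm_compute. Qed.
Lemma c_F1 : all (fun i => all (fun k => G_adj' (e1 i k) (e2 i k)) (iota 0 16)) ord9l.
Proof. by vm_compute. Qed.
Lemma c_F2 : all (fun i => all (fun p => all (fun k => if inc p k then eqv (i, o10 p) (e1 i k) || eqv (i,o10 p) (e2 i k) else true) (iota 0 16)) (iota 0 10)) ord9l.
Proof. by vm_compute. Qed.
Lemma c_F3 : all (fun i => all (fun p => all (fun w => if G_adj' (i, o10 p) w then has (fun k => inc p k && ((eqv (i,o10 p) (e1 i k) && eqv w (e2 i k)) || (eqv (i,o10 p) (e2 i k) && eqv w (e1 i k)))) (iota 0 16) else true) allGV) (iota 0 10)) ord9l.
Proof. by vm_compute. Qed.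
Lemma c_F4 : all (fun i => all (fun k1 => all (fun k2 => if k1 != k2 then ~~ ((eqv (e1 i k1) (e1 i k2) && eqv (e2 i k1) (e2 i k2)) || (eqv (e1 i k1) (e2 i k2) && eqv (e2 i k1) (e1 i k2))) else true) (iota 0 16)) (iota 0 16)) ord9l.
Proof. by vm_compute. Qed.


Lemma eqoE n (a b : 'I_n) : (a == b) = eqn a b.
Proof. by []. Qed.

Lemma eqvE (x y : GV) : eqv x y = (x == y).
Proof. by case: x y => [a b] [c d]; rewrite /eqv xpair_eqE. Qed.

Lemma o10K (p : 'I_10) : o10 p = p.
Proof. by apply: val_inj; rewrite /= modn_small. Qed.
Lemma o9K (p : 'I_9) : o9 p = p.
Proof. by apply: val_inj; rewrite /= modn_small. Qed.

Lemma mem9 (i : 'I_9) : i \in ord9l.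
Proof. by apply/mapP; exists (val i); rewrite ?mem_iota ?o9K //= ltn_ord. Qed.
Lemma mem10 (i : 'I_10) : i \in ord10l.
Proof. by apply/mapP; exists (val i); rewrite ?mem_iota ?o10K //= ltn_ord. Qed.

Lemma memGV (x : GV) : x \in allGV.
Proof.
case: x => i p; apply/allpairsP; exists (i, p); split => //; [exact: mem9 | exact: mem10].
Qed.

Lemma G_adjE (x y : GV) : G_adj x y = G_adj' x y.
Proof.
have u0v : (u0 : nat) = 0 by rewrite /u0 inordK.
have v0v : (v0 : nat) = 1 by rewrite /v0 inordK.
rewrite /G_adj /G_adj' /petersen_minus_adj /adj_minus /pma /petersen_adj !eqoE u0v v0v.
by [].
Qed.

Lemma simpleG : simple_graph G_adj.
Proof.
split.
  move=> x; rewrite G_adjE; exact: negbTE (allP c_irr x (memGV x)).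
move=> x y; rewrite !G_adjE.
exact: (eqP (allP (allP c_sym x (memGV x)) y (memGV y))).
Qed.

Lemma card_count (P : pred GV) : #|[set y | P y]| = count P allGV.
Proof.
rewrite -size_filter -(card_uniqP (filter_uniq P c_uniq)).
by apply: eq_card => y; rewrite inE mem_filter memGV andbT.
Qed.

Lemma cubicG : cubic G_adj.
Proof.
move=> x; rewrite (card_count (G_adj x)) (eq_count (a2 := G_adj' x)); last by move=> y; rewrite G_adjE.
exact: (eqP (allP c_cub x (memGV x))).
Qed.

Lemma bridgelessG : bridgeless G_adj.
Proof.
move=> x y; rewrite G_adjE => Hxy.
have := allP (allP c_bridge x (memGV x)) y (memGV y); rewrite Hxy /bridge_ok.
case: (dfsp _ _ _ _ _).1 => [p|] //; case/andP => Hp Hl.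
apply/connectP; exists p; last by rewrite eqvE in Hl; rewrite (eqP Hl).
have E : @adjm x y =2 adj_minus G_adj x y.
  by move=> a b; rewrite /adjm /adj_minus G_adjE !eqvE.
by rewrite -(eq_path E).
Qed.

Lemma cardGV : #|GV| = 90.
Proof. by rewrite /GV card_prod !card_ord. Qed.


Definition unc (M : {set {set GV}}) : {set GV} := [set x | [forall e in M, x \notin e]].
Definition bad (M : {set {set GV}}) : {set 'I_9} := [set i | [exists p : 'I_10, (i, p) \in unc M]].

Lemma edge_form e : e \in edge_set G_adj -> exists x y, G_adj x y /\ e = [set x; y].
Proof. by rewrite inE => /existsP [x /existsP [y /andP [H /eqP E]]]; exists x, y. Qed.

Lemma card_edge e : e \in edge_set G_adj -> #|e| = 2.
Proof.
move=> /edge_form [x [y [H ->]]]; rewrite cards2.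
case: eqP H => [->|//]; by rewrite (proj1 simpleG).
Qed.

Lemma unc_le2 M : is_kmatching G_adj 44 M -> #|unc M| <= 2.
Proof.
move=> /andP[/andP[Hsub Hdis] /eqP Hcard].
have triv : trivIset M.
  apply/trivIsetP => A B HA HB HAB.
  by move/forall_inP: Hdis => /(_ A HA) /forall_inP /(_ B HB) /implyP; apply.
have Hsum : \sum_(B in M) #|B| = 88.
  rewrite (eq_bigr (fun _ => 2)); first by rewrite sum_nat_const Hcard.
  by move=> B HB; apply: card_edge; apply: (subsetP Hsub).
have Hc : #|cover M| = 88 by rewrite -(eqP triv).
have -> : unc M = ~: cover M.
  apply/setP => x; rewrite !inE /cover; apply/forall_inP/negP => [H /bigcupP [B HB HxB] | H B HB].
    by move: (H B HB); rewrite HxB.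
  by apply/negP => HxB; apply: H; apply/bigcupP; exists B.
by rewrite cardsCs setCK Hc cardGV.
Qed.

Lemma bad_le2 M : is_kmatching G_adj 44 M -> #|bad M| <= 2.
Proof.
move=> HM; apply: leq_trans (unc_le2 HM).
apply: leq_trans (leq_imset_card fst (unc M)).
apply: subset_leq_card; apply/subsetP => i; rewrite inE => /existsP [p Hp].
by apply/imsetP; exists (i, p).
Qed.

Lemma set2_eqv (a b c d : GV) : [set a; b] = [set c; d] -> (a == c) && (b == d) || (a == d) && (b == c).
Proof.
move=> E.
have Ha : a \in [set c; d] by rewrite -E set21.
have Hb : b \in [set c; d] by rewrite -E set22.
have Hc : c \in [set a; b] by rewrite E set21.
have Hd : d \in [set a; b] by rewrite E set22.
move: Ha Hb Hc Hd; rewrite !inE.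
by do 4 (case/orP => /eqP ?); subst; rewrite ?eqxx ?orbT.
Qed.

Lemma allbl_mem n s : size s = n -> s \in allbl n.
Proof.
elim: n s => [|n IH] [|b s] //=.
move=> [Hs].
by case: b; rewrite !mem_cat (map_f _ (IH _ Hs)) ?orbT.
Qed.


Lemma local_pm M (i : 'I_9) : is_kmatching G_adj 44 M ->
  (forall p : 'I_10, exists2 e, e \in M & (i, p) \in e) ->
  locPM (mkseq (fun k => [set e1 i k; e2 i k] \in M) 16).
Proof.
move=> /andP[/andP[Hsub Hdis] _] Hcov.
have Hdis' : forall e f, e \in M -> f \in M -> e != f -> [disjoint e & f].
  by move=> e f He Hf; move/forall_inP: Hdis => /(_ e He) /forall_inP /(_ f Hf) /implyP.
apply/allP => p; rewrite mem_iota add0n => /andP[_ Hp].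
set y := fun k => [set e1 i k; e2 i k] \in M.
rewrite (@eq_in_count _ _ y); last first.
  by move=> k; rewrite mem_filter mem_iota add0n => /andP[_ /andP[_ Hk]]; rewrite nth_mkseq.
pose pp : 'I_10 := Ordinal Hp.
have opp : o10 p = pp by apply: val_inj; rewrite /= modn_small.
have Hpi : p \in iota 0 10 by rewrite mem_iota.
have [e He Hin] := Hcov pp.
have [a [b [Hab Eab]]] := edge_form (subsetP Hsub e He).
have [w [Hw Ew]] : exists w, G_adj (i, pp) w /\ e = [set (i, pp); w].
  move: Hin; rewrite Eab !inE => /orP[/eqP Ea|/eqP Eb].
    by exists b; rewrite Ea; split.
  by exists a; rewrite Eb; split; [rewrite (proj2 simpleG) | exact: setUC].
have := allP (allP (allP c_F3 i (mem9 i)) p Hpi) w (memGV w).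
rewrite opp -G_adjE Hw => /hasP [k0 Hk0 /andP [Hinc0 Hpair]].
have Ek0 : e = [set e1 i k0; e2 i k0].
  by case/orP: Hpair => /andP [E1 E2]; rewrite eqvE in E1; rewrite eqvE in E2;
    rewrite Ew (eqP E1) (eqP E2) // setUC.
have y0 : y k0 by rewrite /y -Ek0.
have Hmem : forall k, k \in iota 0 16 -> inc p k -> (i, pp) \in [set e1 i k; e2 i k].
  move=> k Hk Hik; have := allP (allP (allP c_F2 i (mem9 i)) p Hpi) k Hk.
  by rewrite Hik opp !eqvE !inE.
have uniq_k : forall k, k \in filter (inc p) (iota 0 16) -> y k -> k = k0.
  move=> k; rewrite mem_filter => /andP[Hinc Hk] Hy.
  apply/eqP; apply: contraT => Hne.
  have := allP (allP (allP c_F4 i (mem9 i)) k Hk) k0 Hk0; rewrite Hne.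
  rewrite !eqvE => Hnp.
  have Hneq : [set e1 i k; e2 i k] != [set e1 i k0; e2 i k0].
    by apply/eqP => /set2_eqv; apply/negP.
  have Hd := Hdis' _ _ Hy y0 Hneq.
  by have := disjointFr Hd (Hmem k Hk Hinc); rewrite (Hmem k0 Hk0 Hinc0).
rewrite (@eq_in_count _ _ (pred1 k0)); last first.
  move=> k Hk /=; apply/idP/eqP => [|->] //; exact: uniq_k.
by rewrite count_uniq_mem ?filter_uniq ?iota_uniq // mem_filter Hinc0 Hk0.
Qed.

Lemma no_cover m (Ms : 'I_m -> {set {set GV}}) : m <= 4 ->
  (forall j, is_kmatching G_adj 44 (Ms j)) -> \bigcup_(j < m) Ms j = edge_set G_adj -> False.
Proof.
move=> Hm HM Hcov.
have Hb : #|\bigcup_(j < m) bad (Ms j)| <= \sum_(j < m) 2.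
  apply: (big_ind2 (fun (A : {set 'I_9}) n => #|A| <= n)).
  - by rewrite cards0.
  - move=> A1 n1 A2 n2 H1 H2; rewrite cardsU.
    apply: leq_trans (leq_subr _ _) _; exact: leq_add.
  - move=> j _; exact: bad_le2.
rewrite sum_nat_const card_ord in Hb.
have [i Hi] : exists i, i \in ~: \bigcup_(j < m) bad (Ms j).
  apply/card_gt0P; have := cardsC (\bigcup_(j < m) bad (Ms j)); rewrite card_ord.
  move=> E; rewrite -(ltn_add2l #|\bigcup_(j < m) bad (Ms j)|) E addn0.
  apply: leq_ltn_trans Hb _.
  by apply: (@leq_ltn_trans (4 * 2)); rewrite // leq_mul2r Hm orbT.
rewrite inE in Hi.
have Hcl : forall j (p : 'I_10), exists2 e, e \in Ms j & (i, p) \in e.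
  move=> j p; have : i \notin bad (Ms j).
    by apply: contra Hi => H; apply/bigcupP; exists j.
  rewrite /bad inE negb_exists => /forallP /(_ p); rewrite /unc inE negb_forall.
  by case/existsP => e; rewrite negb_imply negbK => /andP[He Hin]; exists e.
pose s := fun j => mkseq (fun k => [set e1 i k; e2 i k] \in Ms j) 16.
have Hpm : forall j, s j \in pmlist.
  move=> j; have := allP c_L (s j) (allbl_mem (size_mkseq _ _)).
  by rewrite (local_pm (HM j) (Hcl j)).
have Hcv : forall k, k < 16 -> exists j, nth false (s j) k.
  move=> k Hk; have : [set e1 i k; e2 i k] \in edge_set G_adj.
    rewrite inE; apply/existsP; exists (e1 i k); apply/existsP; exists (e2 i k).
    rewrite eqxx andbT G_adjE; apply: (allP (allP c_F1 i (mem9 i)) k).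
    by rewrite mem_iota.
  rewrite -Hcov => /bigcupP [j _ Hj]; exists j; by rewrite nth_mkseq.
pose ts := [seq s j | j <- enum 'I_m].
pose S := filter (fun t => t \in ts) pmlist.
have HS : size S <= 4.
  apply: leq_trans Hm; apply: (@leq_trans (size ts)); last by rewrite size_map size_enum_ord.
  apply: uniq_leq_size; first exact: filter_uniq c_pmuniq.
  by move=> t; rewrite mem_filter => /andP[].
have Hmsk : map (fun t => t \in ts) pmlist \in allbl 6 by apply: allbl_mem; rewrite size_map.
have := allP c_C2 _ Hmsk; rewrite -(filter_mask (fun t => t \in ts) pmlist) -/S HS => /hasP [k Hk /allP Hall].
have k16 : k < 16 by move: Hk; rewrite mem_iota.
have [j Hj] := Hcv k k16.
have : s j \in S by rewrite mem_filter Hpm andbT; apply: map_f; rewrite mem_enum.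
by move/Hall; rewrite Hj.
Qed.

Theorem mainTheorem8 :
  [/\ simple_graph G_adj, cubic G_adj, bridgeless G_adj, #|GV| = 90
    & excessive_index_ge G_adj 44 5].
Proof.
split; [exact: simpleG | exact: cubicG | exact: bridgelessG | exact: cardGV |].
move=> m [Ms [HM Hcov]]; rewrite leqNgt; apply/negP => Hm.
exact: (no_cover Hm HM Hcov).
Qed.
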